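(* Let $X$ be a topological space, let $Y$ be a countable compact topological space, and let $f:X\times Y\to\overline{\mathbb R}$ be a separately continuous function. Then $(\wedge_f,\vee_f)$ is a stable pair of Hahn on $X$.
   Context: $\overline{\mathbb R}=[-\infty,+\infty]$ with its usual order topology. For $f:X\times Y\to\overline{\mathbb R}$ the minimal and maximal sections $\wedge_f,\vee_f:X\to\overline{\mathbb R}$ are $\wedge_f(x)=\inf_{y\in Y}f(x,y)$ and $\vee_f(x)=\sup_{y\in Y}f(x,y)$. $f$ is separately continuous if $y\mapsto f(x,y)$ is continuous for each $x\in X$ and $x\mapsto f(x,y)$ is continuous for each $y\in Y$. A pair $(g,h)$ of functions $g,h:X\to\overline{\mathbb R}$ is a stable pair of Hahn if there is a sequence of continuous functions $u_n:X\to\overline{\mathbb R}$ such that $g(x)=\min_{n\in\mathbb N}u_n(x)$ and $h(x)=\max_{n\in\mathbb N}u_n(x)$ for every $x\in X$ (the minimum and maximum being attained). *)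

(* Defs.v *)
From HB Require Import structures.
From mathcomp Require Import all_boot all_order all_algebra.
From mathcomp Require Import all_classical all_reals all_analysis.
Set Implicit Arguments. Unset Strict Implicit. Unset Printing Implicit Defensive.
Import Order.TTheory GRing.Theory Num.Theory.
Local Open Scope classical_set_scope.
Local Open Scope ereal_scope.

Definition min_section (R : realType) (X Y : Type) (f : X * Y -> \bar R)
  : X -> \bar R := fun x => ereal_inf (range (fun y => f (x, y))).

Definition max_section (R : realType) (X Y : Type) (f : X * Y -> \bar R)
  : X -> \bar R := fun x => ereal_sup (range (fun y => f (x, y))).

Definition separately_continuous (R : realType) (X Y : topologicalType)
  (f : X * Y -> \bar R) : Prop :=
  (forall x : X, continuous (fun y : Y => f (x, y))) /\
  (forall y : Y, continuous (fun x : X => f (x, y))).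

Definition stable_Hahn_pair (R : realType) (X : topologicalType)
  (g h : X -> \bar R) : Prop :=
  exists u : nat -> X -> \bar R,
    (forall n, continuous (u n)) /\
    (forall x : X,
      ((exists n, u n x = g x) /\ (forall n, g x <= u n x)) /\
      ((exists n, u n x = h x) /\ (forall n, u n x <= h x))).

(* Main.v *)
Require Import Defs.
From HB Require Import structures.
From mathcomp Require Import all_boot all_order all_algebra.
From mathcomp Require Import all_classical all_reals all_analysis.
From mathcomp Require Import lra.
Import Order.TTheory GRing.Theory Num.Theory.
Local Open Scope classical_set_scope.
Local Open Scope ereal_scope.

Lemma edense (R : realType) (a b : \bar R) : a < b -> exists c, a < c /\ c < b.
Proof.
case: a => [r| |]; case: b => [s| |] //= ab.
- exists ((r + s) / 2)%:E; rewrite !lte_fin; rewrite lte_fin in ab; split; lra.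
- by exists (r + 1)%:E; rewrite !lte_fin ltey; split => //; lra.
- by exists (s - 1)%:E; rewrite !lte_fin ltNye; split => //; lra.
- by exists 0; rewrite ltNye ltey.
Qed.

Lemma attain_inf (R : realType) (T : topologicalType) (g : T -> \bar R) :
  [set: T] !=set0 -> compact [set: T] -> continuous g ->
  exists t, g t = ereal_inf (range g).
Proof.
move=> [t0 _] cT cg.
set m := ereal_inf (range g).
have [my|my] := ltP m +oo; last first.
  exists t0; apply/eqP; rewrite eq_le; rewrite leye_eq in my; rewrite (eqP my) leey /=.
  by rewrite -(eqP my); apply: ereal_inf_lbound; exists t0.
pose F := filter_from [set a | m < a] (fun a => g @^-1` [set z | z < a]).
have FF : ProperFilter F.
  apply: filter_from_proper.
    apply: filter_from_filter; first by exists +oo.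
    move=> i j mi mj; exists (Order.min i j); first by rewrite /= lt_min mi mj.
    by move=> t /= gt; rewrite lt_min in gt; case/andP: gt.
  move=> a /= ma; have [_ [t _ <-] gta] := ereal_inf_lt ma.
  by exists t.
have [p [_ cp]] := cT F FF (filterT).
exists p; apply/eqP; rewrite eq_le; apply/andP; split; last first.
  by apply: ereal_inf_lbound; exists p.
rewrite leNgt; apply/negP => mp.
have [c [mc cp']] := edense _ _ _ mp.
have nb : nbhs p (g @^-1` [set z | c < z]).
  by apply: cg; apply: open_nbhs_nbhs; split; [exact: open_ereal_gt_ereal|].
have [t [/= a b]] := cp _ _ (ex_intro2 _ _ c mc (@subset_refl _ _)) nb.
by move: (lt_trans a b); rewrite ltxx.
Qed.

Arguments attain_inf {R T g}.

Lemma attain_sup (R : realType) (T : topologicalType) (g : T -> \bar R) :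
  [set: T] !=set0 -> compact [set: T] -> continuous g ->
  exists t, g t = ereal_sup (range g).
Proof.
move=> ne cT cg.
have cg' : continuous (fun t => - g t).
  by move=> x; apply: (continuous_comp (cg x)); exact: oppe_continuous.
have [t ht] := attain_inf ne cT cg'.
exists t; apply: oppe_inj; rewrite ht -ereal_infN; congr ereal_inf.
by rewrite -image_comp.
Qed.

Arguments attain_sup {R T g}.


Theorem theorem2p1 (R : realType) (X Y : topologicalType)
  (f : X * Y -> \bar R) :
  [set: Y] !=set0 ->
  countable [set: Y] -> compact [set: Y] ->
  separately_continuous f ->
  stable_Hahn_pair (min_section f) (max_section f).
Proof.
move=> ne cY cpY [fy fx].
have [y0 _] := ne.
have [e esurj] : exists e : nat -> Y, forall y, exists n, e n = y.
  move/countable_injP: cY => [h hinj].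
  exists (fun n => match pselect (exists y, h y = n) with
                   | left H => projT1 (cid H) | right _ => y0 end).
  move=> y; exists (h y); case: pselect => [H|[]]; last by exists y.
  by apply: hinj; rewrite ?inE //; exact: (projT2 (cid H)).
exists (fun n x => f (x, e n)); split; first by move=> n; exact: fx.
move=> x; split; split.
- have [y hy] := attain_inf ne cpY (fy x).
  by have [n hn] := esurj y; exists n; rewrite hn.
- by move=> n; apply: ereal_inf_lbound; exists (e n).
- have [y hy] := attain_sup ne cpY (fy x).
  by have [n hn] := esurj y; exists n; rewrite hn.
- by move=> n; apply: ereal_sup_ubound; exists (e n).
Qed.
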